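(* For $A,x\in\mathbb{R}$ define $E_0(A,x):=1$, $E_1(A,x):=e^{(1-x)A}$ and, for $n\ge2$, \[ E_n(A,x):=\begin{cases} \exp\!\Big(\big[x(E_1+E_3+\cdots+E_{n-1})-\tfrac n2\big]A\Big), & n \text{ even},\\[4pt] \exp\!\Big(\big[\tfrac{n+1}{2}-x(E_0+E_2+\cdots+E_{n-1})\big]A\Big), & n\text{ odd},\end{cases} \] with all $E_j$ evaluated at $(A,x)$. Define $\varphi_1(A,x):=x-1$, $\varphi_n(A,x):=\varphi_{n-1}(A,x)-1+xE_{n-1}(A,x)$ for $n\ge2$, and the polynomial $p_n(A):=\frac{\partial\varphi_n}{\partial x}(A,1)$. Then for every even $n\ge3$, \[ \frac{p_n(A)}{2-A}=p_{n-1}(A)-\frac{p_{n-2}(A)}{2-A}, \] and for every odd $n\ge3$, \[ \frac{p_n(A)}{2+A}=p_{n-1}(A)-\frac{p_{n-2}(A)}{2+A}. \] Equivalently, $p_n(A)=[2-(-1)^nA]\,p_{n-1}(A)-p_{n-2}(A)$ for all $n\ge3$. *)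

(* Defs.v *)
From Stdlib Require Import Reals.
From Coquelicot Require Import Coquelicot.
Open Scope R_scope.

(* Etriple A x n = (E_n(A,x), Sodd_n, Seven_n) where
   Sodd_n  = sum of E_j(A,x) over odd  j <= n,
   Seven_n = sum of E_j(A,x) over even j <= n. *)
Fixpoint Etriple (A x : R) (n : nat) : R * R * R :=
  match n with
  | O => (1, 0, 1)
  | S m =>
      let '(_, so, se) := Etriple A x m in
      let en :=
        match m with
        | O => exp ((1 - x) * A)
        | _ => if Nat.even n
               then exp ((x * so - INR n / 2) * A)
               else exp (((INR n + 1) / 2 - x * se) * A)
        end in
      if Nat.even n then (en, so, se + en) else (en, so + en, se)
  end.

Definition E (n : nat) (A x : R) : R := fst (fst (Etriple A x n)).

(* phi_1 = x - 1, phi_n = phi_{n-1} - 1 + x E_{n-1} for n >= 2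
   (phi_0 is not used by the paper; set to 0). *)
Fixpoint phi (n : nat) (A x : R) : R :=
  match n with
  | O => 0
  | S O => x - 1
  | S m => phi m A x - 1 + x * E m A x
  end.

Definition p (n : nat) (A : R) : R := Derive (fun x => phi n A x) 1.

(* Main.v *)
Require Import Defs.
From Stdlib Require Import Reals Lra Lia.
From Coquelicot Require Import Coquelicot.
Open Scope R_scope.

Section Aux.
Variable A : R.

Definition En n x := fst (fst (Etriple A x n)).
Definition So n x := snd (fst (Etriple A x n)).
Definition Se n x := snd (Etriple A x n).

Lemma Et_S x m : Etriple A x (S m) =
  let t := Etriple A x m in let so := snd (fst t) in let se := snd t in
  let en := match m with O => exp ((1 - x) * A)
            | _ => if Nat.even (S m) then exp ((x * so - INR (S m) / 2) * A)
                   else exp (((INR (S m) + 1) / 2 - x * se) * A) end in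
  if Nat.even (S m) then (en, so, se + en) else (en, so + en, se).
Proof. cbn [Etriple]. destruct (Etriple A x m) as [[a b] c]. reflexivity. Qed.

Lemma En_S m x : En (S m) x = match m with O => exp ((1 - x) * A)
            | _ => if Nat.even (S m) then exp ((x * So m x - INR (S m) / 2) * A)
                   else exp (((INR (S m) + 1) / 2 - x * Se m x) * A) end.
Proof. unfold En, So, Se; rewrite Et_S; cbv zeta; destruct (Nat.even (S m)); reflexivity. Qed.
Lemma So_S m x : So (S m) x = if Nat.even (S m) then So m x else So m x + En (S m) x.
Proof. unfold En, So, Se; rewrite Et_S; cbv zeta; destruct (Nat.even (S m)); reflexivity. Qed.
Lemma Se_S m x : Se (S m) x = if Nat.even (S m) then Se m x + En (S m) x else Se m x.
Proof. unfold En, So, Se; rewrite Et_S; cbv zeta; destruct (Nat.even (S m)); reflexivity. Qed.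

Fixpoint D (n : nat) : R*R*R*R*R :=
 match n with
 | O => (0,0,0,0,1)
 | S m => let '(_, dso, dse, cso, cse) := D m in
   let e := match m with O => -A | _ => if Nat.even (S m) then A*(cso+dso) else -A*(cse+dse) end in
   if Nat.even (S m) then (e, dso, dse+e, cso, cse+1) else (e, dso+e, dse, cso+1, cse)
 end.

Definition ee n := fst (fst (fst (fst (D n)))).
Definition dso n := snd (fst (fst (fst (D n)))).
Definition dse n := snd (fst (fst (D n))).
Definition cso n := snd (fst (D n)).
Definition cse n := snd (D n).

Lemma D_S m : D (S m) =
  let '(_, dso, dse, cso, cse) := D m in
   let e := match m with O => -A | _ => if Nat.even (S m) then A*(cso+dso) else -A*(cse+dse) end in
   if Nat.even (S m) then (e, dso, dse+e, cso, cse+1) else (e, dso+e, dse, cso+1, cse).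
Proof. reflexivity. Qed.

Lemma ee_S j : ee (S j) = if Nat.even (S j) then A*(cso j + dso j) else -A*(cse j + dse j).
Proof.
  destruct j as [|j].
  - unfold ee, cso, dso, cse, dse; simpl; ring.
  - unfold ee, cso, dso, cse, dse; rewrite D_S.
    destruct (D (S j)) as [[[[a b] c] d] e].
    destruct (Nat.even (S (S j))); reflexivity.
Qed.
Lemma dso_S j : dso (S j) = if Nat.even (S j) then dso j else dso j + ee (S j).
Proof.
  unfold ee, cso, dso, cse, dse; rewrite D_S.
  destruct (D j) as [[[[a b] c] d] e]. destruct (Nat.even (S j)); reflexivity.
Qed.
Lemma dse_S j : dse (S j) = if Nat.even (S j) then dse j + ee (S j) else dse j.
Proof.
  unfold ee, cso, dso, cse, dse; rewrite D_S.
  destruct (D j) as [[[[a b] c] d] e]. destruct (Nat.even (S j)); reflexivity.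
Qed.
Lemma cso_S j : cso (S j) = if Nat.even (S j) then cso j else cso j + 1.
Proof.
  unfold ee, cso, dso, cse, dse; rewrite D_S.
  destruct (D j) as [[[[a b] c] d] e]. destruct (Nat.even (S j)); reflexivity.
Qed.
Lemma cse_S j : cse (S j) = if Nat.even (S j) then cse j + 1 else cse j.
Proof.
  unfold ee, cso, dso, cse, dse; rewrite D_S.
  destruct (D j) as [[[[a b] c] d] e]. destruct (Nat.even (S j)); reflexivity.
Qed.

Lemma ev_S n : Nat.even (S n) = negb (Nat.even n).
Proof.
  induction n; [reflexivity|].
  change (Nat.even (S (S n))) with (Nat.even n). rewrite IHn. now destruct (Nat.even n).
Qed.

Lemma par k : cso k + cse k = INR k + 1 /\ cse k - cso k = if Nat.even k then 1 else 0.
Proof.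
  induction k as [|k [H1 H2]].
  - unfold cso, cse; simpl; split; ring.
  - rewrite cso_S, cse_S, S_INR, ev_S.
    destruct (Nat.even k); simpl in *; split; lra.
Qed.

Lemma main n : En n 1 = 1 /\ So n 1 = cso n /\ Se n 1 = cse n /\
  is_derive (En n) 1 (ee n) /\ is_derive (So n) 1 (dso n) /\ is_derive (Se n) 1 (dse n).
Proof.
  induction n as [|m [V1 [V2 [V3 [D1 [D2 D3]]]]]].
  - unfold En, So, Se, ee, dso, dse, cso, cse; simpl.
    split;[|split;[|split;[|split;[|split]]]]; try reflexivity; apply (is_derive_const (V:=R_NormedModule)).
  - assert (HE : En (S m) 1 = 1 /\ is_derive (En (S m)) 1 (ee (S m))).
    { destruct m as [|k].
      - split.
        + rewrite En_S. replace ((1 - 1) * A) with 0 by ring. apply exp_0.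
        + apply (is_derive_ext (fun x => exp ((1 - x) * A))).
          { intro t; rewrite En_S; reflexivity. }
          rewrite ee_S. simpl. auto_derive; auto.
          unfold cse, dse; simpl. replace ((1 + - (1)) * A) with 0 by ring. rewrite exp_0. ring.
      - destruct (par (S k)) as [P1 P2].
        rewrite ee_S. destruct (Nat.even (S (S k))) eqn:Hb.
        + assert (Hk : Nat.even (S k) = false) by (rewrite ev_S in Hb; destruct (Nat.even (S k)); auto).
          rewrite Hk in P2.
          assert (Hz : (1 * So (S k) 1 - INR (S (S k)) / 2) * A = 0).
          { rewrite V2, (S_INR (S k)). apply Rmult_eq_0_compat_r. lra. }
          split.
          * rewrite En_S, Hb. rewrite Hz. apply exp_0.
          * apply (is_derive_ext (fun x => exp ((x * So (S k) x - INR (S (S k)) / 2) * A))).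
            { intro t; rewrite En_S, Hb; reflexivity. }
            remember (INR (S (S k)) / 2) as c eqn:Hc.
            auto_derive. { exists (dso (S k)); exact D2. }
            replace (Derive (fun x => So (S k) x) 1) with (dso (S k)) by (symmetry; apply is_derive_unique; exact D2).
            replace ((1 * So (S k) 1 + - c) * A) with 0
              by (rewrite <- Hz; ring).
            rewrite exp_0, V2. ring.
        + assert (Hk : Nat.even (S k) = true) by (rewrite ev_S in Hb; destruct (Nat.even (S k)); auto).
          rewrite Hk in P2.
          assert (Hz : ((INR (S (S k)) + 1) / 2 - 1 * Se (S k) 1) * A = 0).
          { rewrite V3, (S_INR (S k)). apply Rmult_eq_0_compat_r. lra. }
          split.
          * rewrite En_S, Hb. rewrite Hz. apply exp_0.
          * apply (is_derive_ext (fun x => exp (((INR (S (S k)) + 1) / 2 - x * Se (S k) x) * A))).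
            { intro t; rewrite En_S, Hb; reflexivity. }
            remember ((INR (S (S k)) + 1) / 2) as c eqn:Hc.
            auto_derive. { exists (dse (S k)); exact D3. }
            replace (Derive (fun x => Se (S k) x) 1) with (dse (S k)) by (symmetry; apply is_derive_unique; exact D3).
            replace ((c + - (1 * Se (S k) 1)) * A) with 0
              by (rewrite <- Hz; ring).
            rewrite exp_0, V3. ring. }
    destruct HE as [HE1 HE2].
    split; [exact HE1|].
    rewrite So_S, Se_S, cso_S, cse_S.
    destruct (Nat.even (S m)) eqn:Hb.
    + split;[|split;[|split;[|split]]]; auto.
      * rewrite HE1, V3; reflexivity.
      * apply (is_derive_ext (So m)). { intro t; rewrite So_S, Hb; reflexivity. }
        rewrite dso_S, Hb; exact D2.
      * apply (is_derive_ext (fun x => Se m x + En (S m) x)).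
        { intro t; rewrite Se_S, Hb; reflexivity. }
        rewrite dse_S, Hb. apply (is_derive_plus (Se m) (En (S m))); auto.
    + split;[|split;[|split;[|split]]]; auto.
      * rewrite HE1, V2; reflexivity.
      * apply (is_derive_ext (fun x => So m x + En (S m) x)).
        { intro t; rewrite So_S, Hb; reflexivity. }
        rewrite dso_S, Hb. apply (is_derive_plus (So m) (En (S m))); auto.
      * apply (is_derive_ext (Se m)). { intro t; rewrite Se_S, Hb; reflexivity. }
        rewrite dse_S, Hb; exact D3.
Qed.

Fixpoint Pd (n : nat) : R :=
  match n with O => 0 | S O => 1 | S (S k as m) => Pd m + 1 + ee m end.

Lemma phi_der n : is_derive (fun x => phi n A x) 1 (Pd n).
Proof.
  induction n as [|n IH].
  - simpl. apply (is_derive_const (V:=R_NormedModule)).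
  - destruct n as [|k].
    + simpl. auto_derive; [exact I|reflexivity].
    + destruct (main (S k)) as [V1 [_ [_ [D1 _]]]].
      apply (is_derive_ext (fun x => phi (S k) A x - 1 + x * En (S k) x)).
      { intro t; reflexivity. }
      change (Pd (S (S k))) with (Pd (S k) + 1 + ee (S k)).
      remember (fun x => phi (S k) A x) as f eqn:Hf.
      apply (is_derive_ext (fun x => f x - 1 + x * En (S k) x)).
      { intro t; rewrite Hf; reflexivity. }
      auto_derive. { split. exists (Pd (S k)); exact IH. split; auto. exists (ee (S k)); exact D1. }
      replace (Derive (fun x => f x) 1) with (Pd (S k)) by (symmetry; apply is_derive_unique; exact IH).
      replace (Derive (fun x => En (S k) x) 1) with (ee (S k)) by (symmetry; apply is_derive_unique; exact D1).
      rewrite V1. ring.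
Qed.

Lemma p_Pd n : p n A = Pd n.
Proof. unfold p. apply is_derive_unique, phi_der. Qed.

Lemma inv k : Pd (S k) = cso k + cse k + dso k + dse k.
Proof.
  induction k as [|k IH].
  - unfold cso, cse, dso, dse; simpl; ring.
  - change (Pd (S (S k))) with (Pd (S k) + 1 + ee (S k)).
    rewrite IH, cso_S, cse_S, dso_S, dse_S.
    destruct (Nat.even (S k)); ring.
Qed.

Lemma pow_m1 n : (-1) ^ n = if Nat.even n then 1 else -1.
Proof.
  induction n as [|n IH]; [reflexivity|].
  simpl pow. rewrite IH, ev_S. destruct (Nat.even n); simpl; ring.
Qed.

Lemma key j : ee (S (S j)) - ee (S j) = (-1) ^ (S (S j)) * A * Pd (S (S j)).
Proof.
  rewrite pow_m1, inv, ee_S, ee_S.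
  rewrite cso_S, cse_S, dso_S, dse_S.
  change (Nat.even (S (S j))) with (Nat.even j).
  rewrite ev_S.
  destruct (Nat.even j); simpl; ring.
Qed.

Lemma rec3 n : (3 <= n)%nat -> p n A = (2 - (-1) ^ n * A) * p (n - 1) A - p (n - 2) A.
Proof.
  intro H. destruct n as [|[|[|k]]]; try (exfalso; lia).
  rewrite !p_Pd.
  replace (S (S (S k)) - 1)%nat with (S (S k)) by lia.
  replace (S (S (S k)) - 2)%nat with (S k) by lia.
  change (Pd (S (S (S k)))) with (Pd (S (S k)) + 1 + ee (S (S k))).
  change (Pd (S (S k))) with (Pd (S k) + 1 + ee (S k)).
  pose proof (key k) as K.
  change ((-1) ^ S (S (S k))) with (-1 * (-1) ^ S (S k)).
  change (Pd (S (S k))) with (Pd (S k) + 1 + ee (S k)) in K.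
  assert (K' : ee (S (S k)) = ee (S k) + (-1)^(S(S k)) * A * (Pd (S k) + 1 + ee (S k))) by lra.
  rewrite K'. ring.
Qed.

End Aux.

Theorem theorem4p8 :
  (forall (n : nat) (A : R), (3 <= n)%nat -> Nat.even n = true -> A <> 2 ->
     p n A / (2 - A) = p (n - 1) A - p (n - 2) A / (2 - A)) /\
  (forall (n : nat) (A : R), (3 <= n)%nat -> Nat.odd n = true -> A <> -2 ->
     p n A / (2 + A) = p (n - 1) A - p (n - 2) A / (2 + A)) /\
  (forall (n : nat) (A : R), (3 <= n)%nat ->
     p n A = (2 - (-1) ^ n * A) * p (n - 1) A - p (n - 2) A).
Proof.
  split; [|split].
  - intros n A H He HA. rewrite (rec3 A n H), pow_m1, He.
    field. lra.
  - intros n A H Ho HA. unfold Nat.odd in Ho.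
    rewrite (rec3 A n H), pow_m1. destruct (Nat.even n); [discriminate|].
    field. lra.
  - intros n A H. exact (rec3 A n H).
Qed.
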